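(* Let $p$ be an odd prime and let $G_p=W_p/Z(W_p)$, where $W_p=C_2\wr C_p$. Then $\mathrm{diam}_{\max}(G_p)\le \frac{13}{2}(p-1)$.
   Context: The wreath product $W_p=C_2\wr C_p$ is $U\rtimes C_p$ with $U=\mathbb{F}_2^{\,p}$ and a generator of the cyclic group $C_p$ acting by cyclically permuting coordinates. Its center is $Z(W_p)=\{(0,\dots,0),(1,\dots,1)\}$ (of order 2), so $G_p=V\rtimes C$ where $V=U/Z(W_p)$ has dimension $p-1$ over $\mathbb{F}_2$ and $C$ is cyclic of order $p$. For a finite group $G$ and generating set $X$, $\mathrm{diam}(G,X)$ is the smallest $k$ such that every element of $G$ is a product of at most $k$ elements of $X\cup X^{-1}$ (the diameter of the undirected Cayley graph), and $\mathrm{diam}_{\max}(G)=\max\{\mathrm{diam}(G,X): X\subseteq G,\ \langle X\rangle=G\}$. *)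

(* Defs.v *)
From mathcomp Require Import all_boot all_order all_fingroup all_solvable.
Set Implicit Arguments.
Unset Strict Implicit.
Unset Printing Implicit Defensive.
Local Open Scope group_scope.

Section Diameter.
Variable gT : finGroupType.

Fixpoint ball (X : {set gT}) (k : nat) : {set gT} :=
  if k is k'.+1 then ball X k' :|: ball X k' * (X :|: X^-1) else [set 1].

(* diam(G,X): least k with G contained in ball X k (defaults to #|G| if none,
   which never happens when <<X>> = G) *)
Definition diam (G : {set gT}) (X : {set gT}) : nat :=
  \big[minn/#|G|]_(k < #|G|.+1 | G \subset ball X k) k.

Definition diam_max (G : {set gT}) : nat :=
  \max_(X : {set gT} | (X \subset G) && (<<X>> == G)) diam G X.
End Diameter.

(* W_p is realized as its faithful permutation action on 'I_p * bool
   (p blocks of size 2): generated by the flip in block 0 and the cyclic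
   rotation of the blocks. *)
Section Wreath.
Variable p : nat.

Definition flip0_fun (x : 'I_p * bool) : 'I_p * bool :=
  (x.1, x.2 (+) (nat_of_ord x.1 == 0)).

Lemma flip0_inv : involutive flip0_fun.
Proof. by case=> i b; rewrite /flip0_fun /= addbK. Qed.

Definition flip0 : {perm 'I_p * bool} := perm (inv_inj flip0_inv).

Definition rot_fun (x : 'I_p * bool) : 'I_p * bool := (ordS x.1, x.2).

Lemma rot_inj : injective rot_fun.
Proof.
move=> [i b] [j c] H.
have E1 : ordS i = ordS j := congr1 fst H.
have E2 : b = c := congr1 snd H.
by rewrite (ordS_inj E1) E2.
Qed.

Definition rot : {perm 'I_p * bool} := perm rot_inj.

Definition W : {group {perm 'I_p * bool}} := <<[set flip0; rot]>>%G.

Definition Gp := (W / 'Z(W))%G.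
End Wreath.

(* Main.v *)
Require Import Defs.
From mathcomp Require Import all_boot all_order all_fingroup all_solvable.
From mathcomp Require Import zify.
Set Implicit Arguments.
Unset Strict Implicit.
Unset Printing Implicit Defensive.

Module Aux.
Local Open Scope group_scope.

Section Balls.
Variable gT : finGroupType.
Implicit Types (X : {set gT}) (g h : gT).

Lemma ball_sub X m : ball X m \subset ball X m.+1.
Proof. by rewrite /= subsetUl. Qed.

Lemma ball_mono X m n : m <= n -> ball X m \subset ball X n.
Proof.
move=> /subnK <-; elim: (n - m) => [|k IH]; first by rewrite add0n.
by apply: subset_trans IH _; rewrite addSn ball_sub.
Qed.

Lemma ball1 X n : 1 \in ball X n.
Proof.
apply: (subsetP (ball_mono X (leq0n n))); by rewrite /= set11.
Qed.

Lemma ball_step X n g s : g \in ball X n -> s \in X :|: X^-1 -> g * s \in ball X n.+1.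
Proof. by move=> Hg Hs; rewrite /= inE; apply/orP; right; apply: mem_mulg. Qed.

Lemma ball_stepX X n g s : g \in ball X n -> s \in X -> g * s \in ball X n.+1.
Proof. by move=> Hg Hs; apply: ball_step => //; rewrite inE Hs. Qed.

Lemma ball_stepV X n g s : g \in ball X n -> s \in X -> g * s^-1 \in ball X n.+1.
Proof. by move=> Hg Hs; apply: ball_step => //; rewrite inE mem_invg invgK Hs orbT. Qed.

Lemma ball_le X m n g : m <= n -> g \in ball X m -> g \in ball X n.
Proof. by move=> mn; apply: (subsetP (ball_mono X mn)). Qed.

Lemma ballM X m n g h : g \in ball X m -> h \in ball X n -> g * h \in ball X (m + n).
Proof.
move=> Hg; elim: n h => [|n IH] h /=.
  by rewrite inE => /eqP ->; rewrite mulg1 addn0.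
rewrite inE => /orP [Hh|].
  by rewrite addnS; apply: ball_le (IH _ Hh); exact: leqnSn.
case/mulsgP=> h0 s Hh0 Hs ->; rewrite mulgA addnS; apply: ball_step => //.
exact: IH.
Qed.

Lemma diam_le (G : {set gT}) X k : G \subset ball X k -> diam G X <= k.
Proof.
move=> HG; rewrite /diam.
case: (leqP k #|G|) => hk.
  have hk' : k < #|G|.+1 by [].
  have : Ordinal hk' \in index_enum 'I_#|G|.+1 by rewrite mem_index_enum.
  elim: (index_enum _) => [|i r IH] //.
  rewrite inE big_cons => /orP [/eqP <-|/IH ih] /=.
    by rewrite HG geq_minl.
  by case: ifP => _ //; rewrite geq_min ih orbT.
apply: leq_trans (ltnW hk).
apply: (big_ind (fun r => r <= #|G|)) => //.
  by move=> a b ha hb; rewrite geq_min ha.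
by move=> i _; rewrite -ltnS ltn_ord.
Qed.

End Balls.

Local Arguments ball : simpl never.

Section Abstract.
Variables (gT : finGroupType) (V : {group gT}) (X : {set gT}) (x : gT).
Hypotheses (hxN : x \in 'N(V)) (hab : abelian V)
  (h2 : forall v, v \in V -> v * v = 1) (hxX : (x \in X) || (x == 1)).

Lemma ball_x n g : g \in ball X n -> g * x \in ball X n.+1.
Proof.
move=> hg; case/orP: hxX => [hx|/eqP hx]; first exact: ball_stepX.
by rewrite hx mulg1; apply: ball_le _ hg.
Qed.

Lemma xpow_ball e : x ^+ e \in ball X e.
Proof.
elim: e => [|e IH]; first by rewrite expg0 ball1.
by rewrite expgSr; apply: ball_x.
Qed.

Lemma xz_comm z : z \in <[x]> -> commute x z.
Proof. by case/cycleP=> i ->; apply: commuteX. Qed.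

Definition good (U : {set gT}) := exists k, 2 ^ k <= #|U| /\
  forall u : gT, u \in U -> exists2 a : gT, a \in <[x]> & u * a \in ball X (2 * k).

Section Sweep.
Variables (U : {group gT}) (y v z : gT).
Hypotheses (hUV : U \subset V) (hxU : x \in 'N(U)) (hyX : y \in X) (hy : y = v * z)
  (hv : v \in V) (hz : z \in <[x]>).

Definition w s := locked (v ^ (x ^- s)).

Fixpoint A (m : nat) : {group gT} :=
  if m is m'.+1 then (A m' <*> <[w m']>)%G else U.

Lemma wV s : w s \in V.
Proof. by rewrite /w -lock memJ_norm // groupV groupX. Qed.

Lemma AV m : A m \subset V.
Proof.
elim: m => [|m IH] //=; rewrite join_subG IH cycle_subG; exact: wV.
Qed.

Lemma A_mono m k : m <= k -> A m \subset A k.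
Proof.
move=> /subnK <-; elim: (k - m) => [|j IH]; first by rewrite add0n.
by apply: subset_trans IH _; rewrite addSn /= joing_subl.
Qed.

Lemma A_mem m (t : gT) : t \in A m.+1 -> exists2 t0 : gT, t0 \in A m & (t = t0 \/ t = t0 * w m).
Proof.
rewrite /= comm_joingE; last first.
  apply: normC; apply: cents_norm; apply: subset_trans (AV m) _.
  apply: subset_trans hab _; apply: centS; rewrite cycle_subG; exact: wV.
case/mulsgP=> t0 c ht0 /cycleP [i ->] ->; exists t0 => //.
have w2 : w m ^+ 2 = 1 by rewrite expgS expg1 h2 // wV.
rewrite -(expg_mod i w2); have := ltn_pmod i (isT : 0 < 2).
case: (i %% 2) => [|[|j]] // _; first by left; rewrite expg0 mulg1.
by right; rewrite expg1.
Qed.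

Lemma w_shift m : w m * x ^+ m = x ^+ m * v.
Proof. by rewrite /w -lock conjgE invgK -!mulgA mulVg mulg1. Qed.

Lemma sweep m (t : gT) : t \in A m -> exists (u t' : gT), [/\ u \in U, t = u * t' &
  exists b : bool, t' * x ^+ m * z ^+ b \in ball X (2 * m)].
Proof.
elim: m t => [|m IH] t.
  move=> ht; exists t, 1; split; first by [].
    by rewrite mulg1.
  by exists false; rewrite !mul1g expg0 ball1.
case/A_mem=> t0 /IH [u [t0' [hu -> [b hb]]]] [->|->].
  exists u, t0'; split => //; exists b.
  have -> : t0' * x ^+ m.+1 * z ^+ b = t0' * x ^+ m * z ^+ b * x.
    rewrite expgSr -!mulgA; congr (_ * (_ * _)).
    by rewrite (commuteX b (xz_comm hz)).
  rewrite mulnS; apply: ball_le _ (ball_x hb); rewrite add2n; exact: leqnSn.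
exists u, (t0' * w m); split; [done| by rewrite mulgA |].
have hzx : commute x z by apply: xz_comm.
exists (~~ b); rewrite mulnS add2n.
case: b hb => hb /=.
  have -> : t0' * w m * x ^+ m.+1 * z ^+ false = t0' * x ^+ m * z ^+ true * y^-1 * x.
    rewrite hy expg1 expg0 mulg1 invMg !mulgA mulgK.
    rewrite expgSr !mulgA; congr (_ * _); rewrite -!mulgA w_shift.
    by have -> : v^-1 = v by apply/eqP; rewrite eq_invg_mul h2.
  apply: ball_x; apply: ball_stepV => //.
have -> : t0' * w m * x ^+ m.+1 * z ^+ true = t0' * x ^+ m * z ^+ false * y * x.
  rewrite hy expg1 expg0 mulg1 expgSr -!mulgA; congr (_ * _).
  rewrite !mulgA w_shift -!mulgA; congr (_ * (_ * _)).
  exact/esym.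
apply: ball_x; apply: ball_stepX => //.
Qed.

Hypothesis hvU : v \notin U.

Lemma w0 : w 0 = v.
Proof. by rewrite /w -lock expg0 invg1 conjg1. Qed.

Lemma w_ord : w #[x] = v.
Proof. by rewrite /w -lock expg_order invg1 conjg1. Qed.

Lemma w_step s : w s ^ x^-1 = w s.+1.
Proof. by rewrite /w -!lock -conjgM -invMg -expgS. Qed.

Lemma w_in_next s : w s \in A s.+1.
Proof. by rewrite /= (subsetP (joing_subr _ _)) // cycle_id. Qed.

Lemma growth : exists U' : {group gT}, [/\ U' \subset V, x \in 'N(U'),
  U \subset U', #|U| < #|U'| & (good U -> good U')].
Proof.
have ex : exists m, w m \in A m.
  exists #[x]; apply: (subsetP (A_mono (order_gt0 x))).
  by rewrite w_ord -{1}w0 w_in_next.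
case: (ex_minnP ex) => m0 Pm0 minm0.
have m0pos : 0 < m0.
  case: m0 Pm0 minm0 => [|//]; by rewrite /= w0 (negbTE hvU).
have hcard : forall s, s <= m0 -> 2 ^ s * #|U| <= #|A s|.
  elim=> [|s IH] hs; first by rewrite mul1n.
  have ns : w s \notin A s.
    by apply/negP => hw; have := minm0 s hw; rewrite leqNgt hs.
  have sub : A s \subset A s.+1 by apply: A_mono.
  rewrite -(Lagrange sub) expnS -mulnA mulnC.
  apply: leq_mul; first exact: IH (ltnW hs).
  rewrite indexg_gt1; apply/negP => h; case/negP: ns.
  exact: (subsetP h) (w_in_next s).
have hinv : forall s, s <= m0 -> A s :^ x^-1 \subset A m0.
  elim=> [|s IH] hs.
    have hxU' : x^-1 \in 'N(U) by rewrite groupV.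
    by rewrite /= (normP hxU'); apply: (A_mono (leq0n m0)).
  rewrite /= conjYg join_subG IH ?(ltnW hs) //= -cycleJ cycle_subG w_step.
  case: (ltngtP s.+1 m0) => [lt|gt|->] //.
    exact: (subsetP (A_mono lt)) (w_in_next s.+1).
  by move: hs; rewrite leqNgt gt.
exists (A m0); split.
- exact: AV.
- by rewrite -groupV inE hinv.
- exact: (A_mono (leq0n m0)).
- have := hcard m0 (leqnn m0).
  have : 2 <= 2 ^ m0 by rewrite -{1}(expn1 2) leq_exp2l.
  move=> h1 h2'; apply: leq_trans h2'.
  rewrite -{1}(mul1n #|U|) ltn_pmul2r ?cardG_gt0 //.
case=> k [hk hgood]; exists (k + m0); split.
  by rewrite expnD; apply: leq_trans (hcard m0 (leqnn m0)); rewrite mulnC leq_mul2l hk orbT.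
move=> t ht; have [u [t' [hu ht' [b hb]]]] := sweep ht.
have hNU : <[x]> \subset 'N(U) by rewrite cycle_subG.
have ha0 : x ^+ m0 * z ^+ b \in <[x]> by rewrite groupM ?groupX // cycle_id.
have hu' : u ^ (x ^+ m0 * z ^+ b) \in U by rewrite memJ_norm // (subsetP hNU).
have [a1 ha1 hb1] := hgood _ hu'.
exists (x ^+ m0 * z ^+ b * a1); first by rewrite groupM.
have huV : u \in V by apply: (subsetP hUV).
have ht'V : t' \in V.
  have -> : t' = u^-1 * t by rewrite ht' mulKg.
  by rewrite groupM ?groupV // (subsetP (AV m0)).
have -> : t * (x ^+ m0 * z ^+ b * a1) = t' * x ^+ m0 * z ^+ b * (u ^ (x ^+ m0 * z ^+ b) * a1).
  have gen : forall a0 : gT, u * t' * (a0 * a1) = t' * a0 * (a0^-1 * u * a0 * a1).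
    move=> a0; rewrite !mulgA mulgK; congr (_ * _ * _); exact: (centsP hab).
  rewrite ht' -(mulgA t') gen conjgE; congr (_ * (_ * _)). by rewrite -mulgA.
rewrite (_ : (2 * (k + m0) = 2 * m0 + 2 * k)%N); last by rewrite addnC mulnDr.
exact: ballM.
Qed.
End Sweep.

Section Main.
Hypotheses (hXV : X \subset V * <[x]>) (hVgen : V \subset <<X>>).

Definition U0 := (V :&: <[x]>)%G.

Lemma good_U0 : good U0.
Proof.
exists 0; split; first by rewrite expn0 cardG_gt0.
move=> u /setIP [_ hu]; exists u^-1; first by rewrite groupV.
by rewrite mulgV ball1.
Qed.

Lemma xN_U0 : x \in 'N(U0).
Proof.
rewrite -cycle_subG; apply: normsI; first by rewrite cycle_subG.
exact: normG.
Qed.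

Lemma step (U : {group gT}) : U \subset V -> U0 \subset U -> x \in 'N(U) -> good U ->
  ~~ (V \subset U) -> exists U' : {group gT},
  [/\ U' \subset V, U0 \subset U', x \in 'N(U'), #|U| < #|U'| & good U'].
Proof.
move=> hUV hU0 hxU hg nVU.
have hNU : <[x]> \subset 'N(U) by rewrite cycle_subG.
case: (boolP (X \subset U * <[x]>)) => hX.
  case/negP: nVU; apply/subsetP => v hv.
  have : v \in U <*> <[x]>.
    by apply: (subsetP _ _ (subsetP hVgen _ hv)); rewrite gen_subG /= norm_joinEr.
  rewrite norm_joinEr // => /mulsgP [u c hu hc ev].
  have hc' : c \in U0.
    have huV : u \in V by apply: (subsetP hUV).
    have ec : c = u^-1 * v by rewrite ev mulKg.
    by rewrite inE hc andbT ec groupM ?groupV.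
  by rewrite ev groupM // (subsetP hU0).
case/subsetPn: hX => y hyX hyU.
have := subsetP hXV _ hyX; case/mulsgP=> v z hv hz ey.
have hvU : v \notin U.
  by apply: contra hyU => hvU; rewrite ey mem_mulg.
have [U' [h1 h2' h3 h4 h5]] := growth hUV hxU hyX ey hv hz hvU.
exists U'; split => //; last exact: h5.
exact: subset_trans hU0 h3.
Qed.

Lemma good_sub (U : {group gT}) : U \subset V -> V \subset U -> good U -> good V.
Proof.
move=> hUV hVU [k [hk hg]]; exists k; split.
  by apply: leq_trans hk _; apply: subset_leq_card.
by move=> u hu; apply: hg; apply: (subsetP hVU).
Qed.

Lemma good_ind N : forall U : {group gT}, U \subset V -> U0 \subset U -> x \in 'N(U) ->
  good U -> #|V| - #|U| <= N -> good V.
Proof.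
elim: N => [|N IH] U hUV hU0 hxU hg hN;
  (case: (boolP (V \subset U)) => [hVU|nVU]; first exact: good_sub hg);
  have [U' [h1 h2' h3 h4 h5]] := step hUV hU0 hxU hg nVU;
  have hU'V : #|U'| <= #|V| by apply: subset_leq_card.
  by move: hN; rewrite leqn0 subn_eq0 => hle; move: (leq_trans h4 hU'V); rewrite ltnNge hle.
apply: (IH U') => //.
move: hN h4 hU'V; clear; move=> hN h4 hU'V; lia.
Qed.

Lemma good_V : good V.
Proof.
apply: (@good_ind (#|V| - #|U0|) U0).
- by rewrite subsetIl.
- by [].
- exact: xN_U0.
- exact: good_U0.
- by [].
Qed.

Lemma abstract_main (G : {set gT}) n q : #|V| <= 2 ^ n -> G \subset V * <[x]> ->
  #[x] <= q -> G \subset ball X (2 * n + q.-1).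
Proof.
move=> hVn hG hq.
have [k [hk hg]] := good_V.
have kn : k <= n by rewrite -(@leq_exp2l 2) // (leq_trans hk hVn).
apply/subsetP => g /(subsetP hG) /mulsgP [w0 c hw hc ->].
have [a ha hwa] := hg _ hw.
have hac : a^-1 * c \in <[x]> by rewrite groupM ?groupV.
case: (cyclePmin hac) => e he ee.
have -> : w0 * c = w0 * a * (a^-1 * c) by rewrite -mulgA mulKVg.
rewrite ee; apply: ball_le _ (ballM hwa (xpow_ball e)).
have : e <= q.-1 by move: (leq_trans he hq); case: (q) => [|q'] //; rewrite ltnS.
move=> he'; rewrite leq_add // leq_mul2l kn orbT //.
Qed.
End Main.
End Abstract.

Section Concrete.
Variable p : nat.
Hypothesis hp : prime p.

Definition D0set : {set {perm 'I_p * bool}} := [set g : {perm 'I_p * bool} | [forall a, (g a).1 == a.1]].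

Lemma D0_group : group_set D0set.
Proof.
apply/group_setP; split.
  by rewrite inE; apply/forallP => a; rewrite perm1.
move=> g h; rewrite !inE => /forallP hg /forallP hh; apply/forallP => a.
by rewrite permM (eqP (hh _)) (eqP (hg _)).
Qed.

Canonical D0 := Group D0_group.

Lemma D0_fst g a : g \in D0 -> (g a).1 = a.1.
Proof. by rewrite inE => /forallP /(_ a) /eqP. Qed.

Lemma D0_char g : g \in D0 -> forall a, g a = (a.1, a.2 (+) (g (a.1, false)).2).
Proof.
move=> hg [i b] /=.
have f1 := D0_fst (i, false) hg.
case: b => /=.
  have f2 := D0_fst (i, true) hg.
  have ne : g (i, true) != g (i, false).
    by apply/negP => /eqP /perm_inj.
  move: ne f1 f2; case: (g (i, true)) => i1 b1; case: (g (i, false)) => i2 b2 /=.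
  move=> ne e2 e1; subst.
  by move: ne; case: b1; case: b2; rewrite ?eqxx.
by move: f1; case: (g (i, false)) => i2 b2 /= e2; subst.
Qed.

Lemma D0_sq g : g \in D0 -> g * g = 1.
Proof.
move=> hg; apply/permP => a; rewrite permM perm1 (D0_char hg (g a)) (D0_fst _ hg).
rewrite (D0_char hg a) /= addbK; by case: a.
Qed.

Lemma D0_ab : abelian D0.
Proof.
apply/centsP => g hg h hh; apply/permP => a; rewrite !permM.
rewrite (D0_char hh (g a)) (D0_char hg (h a)) (D0_fst _ hg) (D0_fst _ hh).
rewrite (D0_char hg a) (D0_char hh a) /=; congr (_, _).
by rewrite -!addbA (addbC (g _).2).
Qed.

Lemma flip0_D0 : Defs.flip0 p \in D0.
Proof. by rewrite inE; apply/forallP => a; rewrite /Defs.flip0 permE. Qed.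

Lemma rot_fst a : (Defs.rot p a).1 = ordS a.1.
Proof. by rewrite /Defs.rot permE. Qed.

Lemma conj_rot_D0 d : d \in D0 -> d ^ Defs.rot p \in D0.
Proof.
move=> hd; rewrite inE; apply/forallP => a; rewrite conjgE !permM rot_fst (D0_fst _ hd).
by rewrite -rot_fst permKV.
Qed.

Lemma rot_N : Defs.rot p \in 'N(D0).
Proof.
rewrite inE; apply/subsetP => h; rewrite mem_conjg => hh.
by rewrite -(conjgKV (Defs.rot p) h) conj_rot_D0.
Qed.

Lemma iter_ordS n (i : 'I_p) : val (iter n (@ordS p) i) = (i + n) %% p.
Proof.
elim: n => [|n IH] /=; first by rewrite addn0 modn_small.
by rewrite (_ : nat_of_ord (iter n (@ordS p) i) = (i + n) %% p) // addnS -addn1 modnDml addn1.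
Qed.

Lemma iter_rot n a : iter n (Defs.rot p) a = (iter n (@ordS p) a.1, a.2).
Proof.
elim: n => [|n IH] /=; first by case: a.
by rewrite IH /Defs.rot permE.
Qed.

Lemma rot_p : Defs.rot p ^+ p = 1.
Proof.
apply/permP => a; rewrite permX perm1 iter_rot; case: a => i b /=; congr (_, _).
by apply: val_inj; rewrite iter_ordS /= modnDr modn_small.
Qed.

Definition M := (D0 <*> <[Defs.rot p]>)%G.

Lemma M_N : M \subset 'N(D0).
Proof. by rewrite join_subG normG cycle_subG rot_N. Qed.

Lemma W_M : Defs.W p \subset M.
Proof.
rewrite gen_subG; apply/subsetP => g /set2P [->|->].
  by rewrite (subsetP (joing_subl _ _)) // flip0_D0.
by rewrite (subsetP (joing_subr _ _)) // cycle_id.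
Qed.

Lemma W_N : Defs.W p \subset 'N(D0).
Proof. exact: subset_trans W_M M_N. Qed.

Lemma MQ_dvd : #|M / D0| %| p.
Proof.
have hrN : Defs.rot p \in 'N(D0) := rot_N.
rewrite /= norm_joinEr ?cycle_subG // quotientMidl quotient_cycle //.
by rewrite -orderE order_dvdn -morphX // rot_p morph1.
Qed.


Lemma decomp x : x \in Defs.W p -> x \notin D0 ->
  (forall g, g \in Defs.W p -> exists j, g * (x ^+ j)^-1 \in D0) /\ x ^+ (p * 2) = 1.
Proof.
move=> hxW hxD.
have hxN : x \in 'N(D0) := subsetP W_N x hxW.
have hxM : x \in M := subsetP W_M x hxW.
set xb := coset D0 x.
have xb1 : xb != 1 by apply: contra hxD => /eqP h; apply: coset_idr.
have hxbQ : xb \in M / D0 by apply: mem_quotient.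
have ordp : #[xb] = p.
  have h1 : (#[xb] != 1)%N by rewrite order_eq1.
  apply/(prime_nt_dvdP hp h1).
  exact: dvdn_trans (order_dvdG hxbQ) MQ_dvd.
have cyc : M / D0 = <[xb]>.
  apply/eqP; rewrite eq_sym eqEcard cycle_subG hxbQ /= -orderE ordp.
  exact: dvdn_leq (prime_gt0 hp) MQ_dvd.
split.
  move=> g hgW; have hgN := subsetP W_N g hgW.
  have : coset D0 g \in <[xb]> by rewrite -cyc mem_quotient // (subsetP W_M).
  case/cycleP => j hj; exists j; apply: coset_idr.
    by rewrite groupM ?groupV ?groupX.
  by rewrite morphM ?groupV ?groupX // morphV ?groupX // morphX // -/xb -hj mulgV.
have : x ^+ p \in D0.
  apply: coset_idr; first by rewrite groupX.
  by rewrite morphX // -/xb; have := expg_order xb; rewrite ordp.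
by move=> h; rewrite expgM expgS expg1 D0_sq.
Qed.

Lemma D0_card : #|D0| <= 2 ^ p.
Proof.
pose f (g : {perm 'I_p * bool}) := [ffun i : 'I_p => (g (i, false)).2].
rewrite -(card_in_imset (f := f) (D := D0)).
  by apply: leq_trans (max_card _) _; rewrite card_ffun card_bool card_ord.
move=> g h hg hh /= /ffunP e; apply/permP => a.
by rewrite (D0_char hg) (D0_char hh); have := e a.1; rewrite !ffunE => ->.
Qed.

Definition D := (Defs.W p :&: D0)%G.
Definition V := (D / 'Z(Defs.W p))%G.

Lemma main_bound : diam_max (Defs.Gp p : {set _}) <= 2 * p + (p * 2).-1.
Proof.
rewrite /diam_max; apply/bigmax_leqP => X /andP [hXG /eqP hgen].
apply: diam_le.
have hVG : V \subset Defs.Gp p by apply: quotientS; apply: subsetIl.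
have hGN : Defs.Gp p \subset 'N(V).
  by apply: quotient_norms; apply: normsI (normG _) W_N.
have hab : abelian V by apply: quotient_abelian; apply: abelianS (subsetIr _ _) D0_ab.
have h2 : forall v, v \in V -> v * v = 1.
  move=> v /morphimP [d hdN hdD ->].
  by rewrite -morphM // D0_sq ?morph1 // (subsetP (subsetIr _ _) _ hdD).
have hVn : #|V| <= 2 ^ p.
  apply: leq_trans (leq_quotient _ _) _.
  exact: leq_trans (subset_leq_card (subsetIr _ _)) D0_card.
have hVgen : V \subset <<X>> by rewrite hgen.
case: (boolP (X \subset V)) => hXV.
  have hxN : (1 : coset_of 'Z(Defs.W p)) \in 'N(V) by rewrite group1.
  have hxX : ((1 : coset_of 'Z(Defs.W p)) \in X) || ((1 : coset_of 'Z(Defs.W p)) == 1) by rewrite eqxx orbT.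
  have hXV' : X \subset V * <[1]> by rewrite cycle1 mulg1.
  have hG : (Defs.Gp p : {set _}) \subset V * <[1]> by rewrite cycle1 mulg1 -hgen gen_subG.
  have hq : #[(1 : coset_of 'Z(Defs.W p))] <= p * 2 by rewrite order1 muln_gt0 prime_gt0.
  exact: (abstract_main hxN hab h2 hxX hXV' hVgen hVn hG hq).
case/subsetPn: hXV => x hxX hxV.
have hxG := subsetP hXG x hxX.
have hxN := subsetP hGN x hxG.
case/morphimP: (hxG) => x0 hx0N hx0W ex.
have hx0D : x0 \notin D0.
  by apply: contra hxV => h; rewrite ex mem_quotient // inE hx0W h.
have [hdec hpow] := decomp hx0W hx0D.
have hG : (Defs.Gp p : {set _}) \subset V * <[x]>.
  apply/subsetP => g /morphimP [g0 hg0N hg0W ->].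
  have [j hj] := hdec g0 hg0W.
  have hx0jN : x0 ^+ j \in 'N('Z(Defs.W p)) by rewrite groupX.
  rewrite -(mulgKV (x0 ^+ j) g0) morphM ?groupM ?groupV // morphX // -ex.
  apply: mem_mulg; last exact: mem_cycle.
  by apply: mem_quotient; rewrite inE hj andbT groupM ?groupV ?groupX.
have hXV' : X \subset V * <[x]> by apply: subset_trans hXG hG.
have hxX' : (x \in X) || (x == 1) by rewrite hxX.
have hq : #[x] <= p * 2.
  apply: dvdn_leq; first by rewrite muln_gt0 prime_gt0.
  by rewrite order_dvdn ex -morphX // hpow morph1.
exact: (abstract_main hxN hab h2 hxX' hXV' hVgen hVn hG hq).
Qed.

End Concrete.

End Aux.

Theorem theorem4 (p : nat) (hp : prime p) (hodd : odd p) :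
  2 * diam_max (Gp p : {set _}) <= 13 * (p - 1).
Proof.
have p3 : 2 < p.
  have := prime_gt1 hp; rewrite leq_eqVlt => /orP [/eqP e|//].
  by rewrite -e in hodd.
apply: (@leq_trans (2 * (2 * p + (p * 2).-1))).
  by rewrite leq_mul2l Aux.main_bound ?orbT.
move: p3; clear; move=> p3; lia.
Qed.
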